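(* Let $k \geq 2$ and let $\Sigma_k$ be an alphabet with $k$ letters. For $n \geq 0$ let $p_k(n)$ be the number of palstars of length $2n$ over $\Sigma_k$, and let $u_k(n)$ be the number of unbordered strings of length $n$ over $\Sigma_k$. Then for all $n \geq 1$, $$p_k(n) = \sum_{1 \leq i \leq n} u_k(i)\, p_k(n-i).$$
   Context: Let $P = \{ x x^R : x \in \Sigma_k^+\}$ be the set of nonempty even-length palindromes over $\Sigma_k$ (here $x^R$ is the reversal of $x$). A palstar is an element of $P^* = \bigcup_{i\ge 0} P^i$, i.e. a (possibly empty) concatenation of nonempty even-length palindromes; in particular the empty string is a palstar, so $p_k(0)=1$. A nonempty string $x$ is a border of a string $y$ if $x \neq y$ and $x$ is both a prefix and a suffix of $y$; $y$ is unbordered if it has no border (so the empty string and every single letter are unbordered, and $u_k(0)=1$). *)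

(* Defs.v *)
From mathcomp Require Import all_boot.
From mathcomp Require Import boolp.
Set Implicit Arguments. Unset Strict Implicit. Unset Printing Implicit Defensive.

Definition even_pal (k : nat) (s : seq 'I_k) : Prop :=
  exists x : seq 'I_k, x != [::] /\ s = x ++ rev x.

Inductive palstar (k : nat) : seq 'I_k -> Prop :=
| palstar_nil : palstar [::]
| palstar_cat (p w : seq 'I_k) : even_pal p -> palstar w -> palstar (p ++ w).

Definition border (k : nat) (x y : seq 'I_k) : Prop :=
  x <> [::] /\ x <> y /\ prefix x y /\ suffix x y.

Definition unbordered (k : nat) (y : seq 'I_k) : Prop :=
  ~ exists x, border x y.

Definition pk (k n : nat) : nat :=
  #|[set t : (2 * n).-tuple 'I_k | `[< palstar (val t) >] ]|.

Definition uk (k n : nat) : nat :=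
  #|[set t : n.-tuple 'I_k | `[< unbordered (val t) >] ]|.

(* Main.v *)
Require Import Defs.
From mathcomp Require Import all_boot.
From mathcomp Require Import boolp.
From mathcomp Require Import zify.
Set Implicit Arguments. Unset Strict Implicit. Unset Printing Implicit Defensive.

Definition N {k : nat} (P : pred (seq 'I_k)) (n : nat) : nat :=
  \sum_(t : n.-tuple 'I_k) (P (val t) : nat).

Lemma N_ext k (P Q : pred (seq 'I_k)) n :
  (forall s, size s = n -> P s = Q s) -> N P n = N Q n.
Proof. by move=> H; apply: eq_bigr => t _; rewrite H // size_tuple. Qed.

Lemma N_0 k (P : pred (seq 'I_k)) : N P 0 = P [::].
Proof.
rewrite /N (big_pred1 [tuple]) // => t; apply/esym/eqP; apply: tuple0.
Qed.

Lemma N_S k (P : pred (seq 'I_k)) n :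
  N P n.+1 = \sum_(c : 'I_k) N (fun s => P (c :: s)) n.
Proof.
rewrite /N pair_big /=.
rewrite (reindex (fun p : 'I_k * n.-tuple 'I_k => [tuple of p.1 :: p.2])) //=.
exists (fun t : n.+1.-tuple 'I_k => (thead t, [tuple of behead t])).
  by case=> c t _ /=; rewrite theadE; congr pair; apply: val_inj.
by move=> t _; rewrite [in RHS](tuple_eta t).
Qed.

Lemma N_true k n : N (fun _ : seq 'I_k => true) n = k ^ n.
Proof.
elim: n => [|n IH]; first by rewrite N_0.
rewrite N_S (eq_bigr (fun _ => k ^ n)) ?sum_nat_const ?card_ord ?expnS //.
Qed.

Lemma N_const k (b : bool) (P : pred (seq 'I_k)) n :
  N (fun s => b && P s) n = b * N P n.
Proof. case: b; rewrite ?mul1n ?mul0n //. by rewrite /N big1. Qed.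

Lemma N_split k (P Q : pred (seq 'I_k)) a b :
  N (fun s => P (take a s) && Q (drop a s)) (a + b) = N P a * N Q b.
Proof.
elim: a P => [|a IH] P.
  by rewrite add0n N_0 -N_const; apply: N_ext => s _; rewrite take0 drop0.
rewrite addSn N_S N_S big_distrl /=; apply: eq_bigr => c _.
by rewrite -IH.
Qed.

Lemma N_sum k (P : pred (seq 'I_k)) n (r : seq nat) (Q : nat -> pred (seq 'I_k)) :
  (forall s, size s = n -> (P s : nat) = \sum_(j <- r) (Q j s : nat)) ->
  N P n = \sum_(j <- r) N (Q j) n.
Proof.
move=> H; rewrite /N exchange_big /=; apply: eq_bigr => t _.
by rewrite H // size_tuple.
Qed.

Lemma N_eqw k (w : seq 'I_k) (P : pred (seq 'I_k)) :
  N (fun s => (s == w) && P s) (size w) = P w.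
Proof.
elim: w P => [|c w IH] P; first by rewrite N_0.
rewrite N_S (bigD1 c) //= big1 ?addn0.
  by rewrite -(IH (fun s => P (c :: s))); apply: N_ext => s _; rewrite eqseq_cons eqxx.
move=> d /negbTE dc; rewrite /N big1 // => t _.
by rewrite eqseq_cons dc.
Qed.

Lemma N_app k (f : seq 'I_k -> seq 'I_k) (P : pred (seq 'I_k)) a m :
  (forall x, size x = a -> size (f x) = m) ->
  N (fun s => (drop a s == f (take a s)) && P s) (a + m) =
  N (fun x => P (x ++ f x)) a.
Proof.
elim: a f P => [|a IH] f P Hf.
  rewrite add0n N_0 /= -(Hf [::]) // -N_eqw; apply: N_ext => s _.
  by rewrite drop0 take0; case: eqP => // ->.
rewrite addSn !N_S; apply: eq_bigr => c _ /=.
rewrite -(IH (fun x => f (c :: x)) (fun s => P (c :: s))) //.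
by move=> x Hx; apply: Hf => /=; rewrite Hx.
Qed.

Ltac slia := simpl; lia.

Definition pal {k : nat} (s : seq 'I_k) := rev s == s.
Definition epal {k : nat} (s : seq 'I_k) := [&& s != [::], ~~ odd (size s) & pal s].
Definition primew {k : nat} (s : seq 'I_k) :=
  epal s && all (fun i => ~~ epal (take i s)) (iota 0 (size s)).
Definition ubd {k : nat} (y : seq 'I_k) :=
  all (fun j => take j y != drop (size y - j) y) (iota 1 (size y).-1).

Lemma evenE m : ~~ odd m -> m = 2 * m./2.
Proof. move=> h; rewrite -{1}(odd_double_half m) (negbTE h) add0n; lia. Qed.

Lemma even_pal_epal {k} (s : seq 'I_k) : even_pal s <-> epal s.
Proof.
split.
  case=> x [xn ->]; rewrite /epal /pal rev_cat revK eqxx andbT.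
  rewrite size_cat size_rev addnn odd_double andbT.
  by case: x xn.
case/and3P=> sn ev /eqP ps.
have hs := evenE ev.
exists (take (size s)./2 s); split.
  have : 0 < size s by rewrite lt0n size_eq0.
  move=> HH; apply/eqP => /(congr1 size); rewrite size_takel /=; lia.
rewrite -{1}(cat_take_drop (size s)./2 s); congr cat.
by rewrite -[X in drop _ X]ps drop_rev; congr (rev (take _ _)); lia.
Qed.

Lemma ubdP {k : nat} (y : seq 'I_k) :
  ubd y <-> (forall j : nat, 0 < j < size y -> take j y != drop (size y - j) y).
Proof.
split.
  by move=> /allP H j hj; apply: H; rewrite mem_iota; lia.
move=> H; apply/allP => j; rewrite mem_iota => hj; apply: H; lia.
Qed.

Lemma unbordered_ubd {k} (y : seq 'I_k) : unbordered y <-> ubd y.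
Proof.
split.
  move=> H; apply/ubdP => j hj; apply/negP => /eqP E.
  apply: H; exists (take j y); split; last split; last split.
  - by move=> /(congr1 size); rewrite size_takel /=; lia.
  - by move=> /(congr1 size); rewrite size_takel /=; lia.
  - by rewrite prefixE size_takel //; slia.
  - by rewrite suffixE size_takel ?E //; slia.
move=> /ubdP H [x [xn [xy [px sx]]]].
move: px sx; rewrite prefixE suffixE => /eqP px /eqP sx.
have hx : size x <= size y by rewrite -px size_take; case: ifP => //; lia.
have h0 : 0 < size x by rewrite lt0n size_eq0; apply/eqP.
have h1 : size x != size y.
  by apply/eqP => e; apply: xy; rewrite -px e take_size.
have := H (size x) ltac:(slia).
by rewrite px sx eqxx.
Qed.

Lemma pal_suffix {k : nat} (p : seq 'I_k) a :
  pal p -> pal (take a p) -> a <= size p -> drop (size p - a) p = take a p.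
Proof.
move=> /eqP pp /eqP pq ha.
rewrite -[X in drop _ X]pp drop_rev.
by have -> : size p - (size p - a) = a by lia.
Qed.

Lemma border_pal {k : nat} (q : seq 'I_k) L :
  pal q -> L <= size q -> take L q = drop (size q - L) q -> pal (take L q).
Proof.
move=> /eqP pq hL E; apply/eqP; rewrite [RHS]E -[X in drop _ X]pq drop_rev.
by have -> : size q - (size q - L) = L by lia.
Qed.

Lemma overlap_border {k : nat} (y : seq 'I_k) j :
  take j y = drop (size y - j) y -> j <= size y -> size y < 2 * j ->
  take (2 * j - size y) (take j y) = drop (size y - j) (take j y).
Proof.
move=> E hj hn.
have -> : drop (size y - j) (take j y) = take (j - (size y - j)) (drop (size y - j) y).
  by rewrite take_drop; congr (drop _ (take _ y)); lia.
by rewrite -E; congr take; lia.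
Qed.

Lemma epal_take_size {k : nat} (s : seq 'I_k) a :
  epal (take a s) -> a <= size s -> 0 < a /\ ~~ odd a.
Proof.
case/and3P=> n0 ev _ ha; rewrite size_takel // in ev; split => //.
by case: a n0 {ev ha}; rewrite ?take0.
Qed.

Lemma overlap_epal {k : nat} (p : seq 'I_k) a :
  epal p -> epal (take a p) -> size p < 2 * a -> a < size p ->
  epal (take (2 * a - size p) p) /\ 0 < 2 * a - size p < a.
Proof.
move=> pp pq h1 h2.
have [a0 aev] := epal_take_size pq (ltnW h2).
case/and3P: pp => _ pev ppal; case/and3P: (pq) => _ _ qpal.
have sq : size (take a p) = a by rewrite size_takel //; lia.
have E : take a p = drop (size p - a) p by rewrite pal_suffix //; lia.
have B := overlap_border E ltac:(lia) h1.
have ha := evenE aev; have hp := evenE pev.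
split; last lia.
have Hpal : pal (take (2 * a - size p) (take a p)).
  apply: border_pal => //; rewrite sq; first lia.
  by have -> : a - (2 * a - size p) = size p - a by lia.
rewrite take_takel in Hpal; last lia.
apply/and3P; split => //.
  apply/eqP => /(congr1 size); rewrite size_takel /=; lia.
rewrite size_takel; last lia.
have -> : 2 * a - size p = 2 * (a - (size p)./2) by lia.
by rewrite oddM.
Qed.

Lemma palstar_app {k} (u v : seq 'I_k) : palstar u -> palstar v -> palstar (u ++ v).
Proof.
elim=> [|p w ep pw IH] pv //; rewrite -catA; apply: palstar_cat => //; exact: IH.
Qed.

Lemma palstar_epal {k} (p : seq 'I_k) : epal p -> palstar p.
Proof.
move=> /even_pal_epal ep; rewrite -(cats0 p); apply: palstar_cat => //.
exact: palstar_nil.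
Qed.

Lemma prime_prefix {k} (s : seq 'I_k) a : primew s -> a < size s -> ~~ epal (take a s).
Proof.
case/andP=> _ /allP H ha; apply: H; rewrite mem_iota; slia.
Qed.

Lemma min_prime {k} (s : seq 'I_k) a :
  epal (take a s) -> (forall i, i < a -> ~~ epal (take i s)) -> a <= size s ->
  primew (take a s).
Proof.
move=> ep H ha; rewrite /primew ep /=; apply/allP => i.
rewrite mem_iota size_takel // => hi.
rewrite take_takel; last slia.
apply: H; slia.
Qed.

Lemma KMP_pal {k} (p : seq 'I_k) a :
  epal p -> epal (take a p) -> (forall i, i < a -> ~~ epal (take i p)) ->
  a < size p -> palstar (drop a p).
Proof.
move=> pp pq H h2.
have [a0 aev] := epal_take_size pq (ltnW h2).
have h : 2 * a <= size p.
  rewrite leqNgt; apply/negP => h1.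
  have [e1 e2] := overlap_epal pp pq h1 h2.
  by move/negP: (H _ (proj2 (andP e2))).
set q := take a p.
case/and3P: (pp) => _ pev ppal0; case/and3P: (pq) => _ _ qpal.
have ppal := eqP ppal0.
have E : drop (size p - a) p = q by rewrite pal_suffix //; lia.
set z := take (size p - 2 * a) (drop a p).
have Dz : drop a p = z ++ q.
  rewrite -{1}(cat_take_drop (size p - 2 * a) (drop a p)) drop_drop -E.
  by congr (_ ++ drop _ p); lia.
have sq : size q = a by rewrite size_takel //; lia.
have sz : size z = size p - 2 * a by rewrite size_takel // size_drop; lia.
have zpal : rev z = z.
  have P3 : p = q ++ z ++ q by rewrite -Dz cat_take_drop.
  have : rev (q ++ z ++ q) = q ++ z ++ q by rewrite -P3.
  rewrite !rev_cat (eqP qpal) -catA.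
  move/(congr1 (drop (size q))); rewrite !drop_size_cat //.
  move/(congr1 (take (size z))); rewrite !take_size_cat // size_rev //.
rewrite Dz; case: (eqVneq z [::]) => [->|zn].
  by apply: palstar_epal.
apply: palstar_app; last exact: palstar_epal.
apply: palstar_epal; apply/and3P; split => //; last by apply/eqP.
have hp := evenE pev; rewrite sz.
have -> : size p - 2 * a = 2 * ((size p)./2 - a) by lia.
by rewrite oddM.
Qed.

Lemma KMP {k} (s : seq 'I_k) : palstar s -> s != [::] ->
  exists a, [/\ 0 < a, a <= size s, primew (take a s) & palstar (drop a s)].
Proof.
case=> [|p w ep pw] // _.
have ep' := ep; move/even_pal_epal: ep' => ep'.
have exP : exists a, epal (take a (p ++ w)) by exists (size p); rewrite take_size_cat.
case: (ex_minnP exP) => a Pa Amin.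
have hap : a <= size p by apply: Amin; rewrite take_size_cat.
have has : a <= size (p ++ w) by rewrite size_cat; lia.
have [a0 _] := epal_take_size Pa has.
exists a; split => //.
  apply: min_prime => // i hi; apply/negP => /Amin; lia.
case: (eqVneq a (size p)) => [->|ne]; first by rewrite drop_size_cat.
have hlt : a < size p by lia.
rewrite drop_cat hlt; apply: palstar_app => //.
apply: KMP_pal => //.
  by rewrite -(takel_cat w hap).
move=> i hi; rewrite -(takel_cat w (_ : i <= size p)); last lia.
by apply/negP => /Amin; lia.
Qed.

Lemma sum_uniq (r : seq nat) (F : nat -> bool) : uniq r ->
  (forall i j, i \in r -> j \in r -> F i -> F j -> i = j) ->
  \sum_(i <- r) (F i : nat) = has F r.
Proof.
elim: r => [|x r IH] //=; first by rewrite big_nil.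
case/andP=> xr ur H; rewrite big_cons IH //; last first.
  by move=> i j hi hj; apply: H; rewrite inE ?hi ?hj orbT.
case Fx: (F x) => //=.
case: hasP => // -[j jr Fj].
have e : x = j by apply: H => //; rewrite inE ?jr ?orbT ?eqxx.
by move: xr; rewrite e jr.
Qed.

Lemma one_sum (r : seq nat) (F : nat -> bool) (G : bool) : uniq r ->
  (forall i j, i \in r -> j \in r -> F i -> F j -> i = j) ->
  (G -> ~~ has F r) -> (~~ G -> has F r) ->
  (true : nat) = G + \sum_(i <- r) (F i : nat).
Proof.
move=> ur H1 H2 H3; rewrite sum_uniq //.
by case: G H2 H3 => [/(_ isT)/negbTE -> //|_ /(_ isT) ->].
Qed.

Lemma N_sum2 k (P R : pred (seq 'I_k)) n (r : seq nat) (Q : nat -> pred (seq 'I_k)) :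
  (forall s, size s = n -> (P s : nat) = R s + \sum_(j <- r) (Q j s : nat)) ->
  N P n = N R n + \sum_(j <- r) N (Q j) n.
Proof.
move=> H; rewrite /N exchange_big /= -big_split /=; apply: eq_bigr => t _.
by rewrite H // size_tuple.
Qed.

Definition palb {k} (s : seq 'I_k) : bool := `[< palstar s >].

Lemma card_N k n (P : seq 'I_k -> Prop) :
  #|[set t : n.-tuple 'I_k | `[< P (val t) >]]| = N (fun s => `[< P s >]) n.
Proof.
rewrite -sum1_card big_mkcond /=; apply: eq_bigr => t _.
by rewrite inE; case: asboolP.
Qed.

Lemma palb_decomp k n (s : seq 'I_k) : 1 <= n -> size s = 2 * n ->
  (palb s : nat) = \sum_(1 <= i < n.+1) (primew (take (2 * i) s) && palb (drop (2 * i) s) : nat).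
Proof.
move=> hn hs; rewrite sum_uniq ?iota_uniq //; last first.
  move=> i j; rewrite !mem_index_iota => hi hj /andP[Pi _] /andP[Pj _].
  have gen : forall i j, 1 <= i <= n -> 1 <= j <= n -> i < j ->
      primew (take (2 * i) s) -> primew (take (2 * j) s) -> False.
    move=> i' j' hi' hj' ij Pi' Pj'.
    have := prime_prefix (a := 2 * i') Pj'; rewrite size_takel; last lia.
    rewrite take_takel; last lia.
    by move=> /(_ ltac:(lia)); case/andP: Pi' => ->.
  case: (ltngtP i j) => // ij; exfalso.
    by apply: (gen i j) => //; lia.
  by apply: (gen j i) => //; lia.
apply/eqP; rewrite eqn_leq; apply/andP; split; last first.
  case: hasP => // -[i hi /andP[Pi /asboolP Di]].
  rewrite /palb; case: asboolP => // -[].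
  rewrite -(cat_take_drop (2 * i) s); apply: palstar_app => //.
  by apply: palstar_epal; case/andP: Pi.
rewrite /palb; case: asboolP => //= ps.
have sn : s != [::] by apply/eqP => e; move: hs; rewrite e /=; lia.
have [a [a0 ha Pa Da]] := KMP ps sn.
have [_ aev] := epal_take_size (proj1 (andP Pa)) ha.
have ea := evenE aev.
have -> // : has (fun i => primew (take (2 * i) s) && palb (drop (2 * i) s)) (index_iota 1 n.+1).
apply/hasP; exists a./2; first by rewrite mem_index_iota; slia.
by rewrite -ea Pa /palb; apply/asboolP.
Qed.

Lemma pal_count k n : 1 <= n ->
  N (@palb k) (2 * n) = \sum_(1 <= i < n.+1) N (@primew k) (2 * i) * N (@palb k) (2 * (n - i)).
Proof.
move=> hn.
rewrite (N_sum (r := index_iota 1 n.+1)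
  (Q := fun i s => primew (take (2 * i) s) && palb (drop (2 * i) s))); last first.
  by move=> s hs; apply: palb_decomp.
apply: eq_big_nat => i /andP[h1 h2].
have -> : 2 * n = 2 * i + 2 * (n - i) by lia.
by rewrite (N_split (@primew k) (@palb k)).
Qed.

Lemma epal_cat_rev {k} (x : seq 'I_k) : x != [::] -> epal (x ++ rev x).
Proof. by move=> xn; apply/even_pal_epal; exists x. Qed.

Lemma prime_decomp k n (x : seq 'I_k) : 1 <= n -> size x = n ->
  (true : nat) = primew (x ++ rev x) +
     \sum_(1 <= j < n) ((2 * j <= n) && primew (take (2 * j) x) : nat).
Proof.
move=> hn hx; apply: one_sum; first exact: iota_uniq.
- move=> i j; rewrite !mem_index_iota => hi hj /andP[i2 Pi] /andP[j2 Pj].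
  have gen : forall i j, 2 * i <= n -> 2 * j <= n -> i < j ->
      primew (take (2 * i) x) -> primew (take (2 * j) x) -> False.
    move=> i' j' hi' hj' ij Pi' Pj'.
    have := prime_prefix (a := 2 * i') Pj'; rewrite size_takel; last lia.
    rewrite take_takel; last lia.
    by move=> /(_ ltac:(lia)); case/andP: Pi' => ->.
  case: (ltngtP i j) => // ij; exfalso.
    by apply: (gen i j) => //; lia.
  by apply: (gen j i) => //; lia.
- move=> G; apply/hasPn => j; rewrite mem_index_iota => hj.
  apply/negP => /andP[j2 Pj].
  have := prime_prefix (a := 2 * j) G; rewrite size_cat size_rev hx.
  rewrite takel_cat; last lia.
  by move=> /(_ ltac:(lia)); case/andP: Pj => ->.
move=> nG.
have xn : x != [::] by apply/eqP => e; move: hx; rewrite e /=; lia.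
have ew := epal_cat_rev xn.
set w := x ++ rev x.
have sw : size w = 2 * n by rewrite size_cat size_rev hx; lia.
have : ~~ all (fun i => ~~ epal (take i w)) (iota 0 (size w)) by move: nG; rewrite /primew ew.
case/allPn => i0 hi0; rewrite negbK => Pi0.
have exP : exists a, epal (take a w) by exists i0.
case: (ex_minnP exP) => a Pa Amin.
have hai : a <= i0 by apply: Amin.
move: hi0; rewrite mem_iota => hi0.
have haw : a <= size w by lia.
have [a0 aev] := epal_take_size Pa haw.
have ea := evenE aev.
have han : a <= n.
  rewrite leqNgt; apply/negP => h1.
  have hh1 : size w < 2 * a by rewrite sw; lia.
  have hh2 : a < size w by rewrite sw; lia.
  have [e1 /andP[e2 e3]] := overlap_epal ew Pa hh1 hh2.
  by have := Amin _ e1; lia.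
have Pw : primew (take a w).
  by apply: min_prime => // i hi; apply/negP => /Amin; lia.
apply/hasP; exists a./2; first by rewrite mem_index_iota; lia.
rewrite -ea; apply/andP; split; first lia.
by move: Pw; rewrite /w takel_cat // hx.
Qed.

Lemma prime_rec k n : 1 <= n ->
  k ^ n = N (@primew k) (2 * n) +
          \sum_(1 <= j < n) (2 * j <= n) * (N (@primew k) (2 * j) * k ^ (n - 2 * j)).
Proof.
move=> hn; rewrite -N_true.
rewrite (N_sum2 (R := fun x => primew (x ++ rev x)) (r := index_iota 1 n)
   (Q := fun j x => (2 * j <= n) && primew (take (2 * j) x))); last first.
  by move=> s hs; apply: prime_decomp.
congr addn.
  rewrite -(@N_app k rev (@primew k) n n); last by move=> x; rewrite size_rev.
  rewrite (_ : n + n = 2 * n); last lia.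
  apply: N_ext => s hs; case Ps: (primew s); rewrite ?andbF ?andbT //.
  move: Ps => /andP[/and3P[_ _ /eqP ps] _].
  rewrite -[X in drop _ X]ps drop_rev hs; apply/eqP; congr (rev (take _ _)); lia.
apply: eq_big_nat => j /andP[h1 h2].
rewrite N_const; case: (leqP (2 * j) n) => hj; rewrite ?mul0n ?mul1n //.
transitivity (N (fun s : seq 'I_k => primew (take (2 * j) s) && (fun _ => true) (drop (2 * j) s)) (2 * j + (n - 2 * j))).
  by rewrite subnKC //; apply: N_ext => s _; rewrite andbT.
by rewrite (N_split (@primew k) (fun _ => true)) N_true.
Qed.

Lemma ubd_decomp k n (y : seq 'I_k) : 1 <= n -> size y = n ->
  (true : nat) = ubd y +
     \sum_(1 <= j < n) ((2 * j <= n) && ((take j y == drop (n - j) y) && ubd (take j y)) : nat).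
Proof.
move=> hn hy; apply: one_sum; first exact: iota_uniq.
- move=> i j; rewrite !mem_index_iota => hi hj /and3P[i2 /eqP Ei Ui] /and3P[j2 /eqP Ej Uj].
  have gen : forall i j, 1 <= i -> 2 * i <= n -> 2 * j <= n -> i < j ->
      take i y = drop (n - i) y -> take j y = drop (n - j) y -> ubd (take j y) -> False.
    move=> i' j' hi0 hi' hj' ij Ei' Ej' Uj'.
    move/ubdP: Uj' => /(_ i'); rewrite size_takel; last lia.
    move=> /(_ ltac:(lia)); rewrite take_takel; last lia.
    rewrite Ej' drop_drop Ei'.
    have -> : j' - i' + (n - j') = n - i' by lia.
    by rewrite eqxx.
  case: (ltngtP i j) => // ij; exfalso.
    by apply: (gen i j) => //; lia.
  by apply: (gen j i) => //; lia.
- move=> /ubdP G; apply/hasPn => j; rewrite mem_index_iota => hj.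
  apply/negP => /and3P[j2 /eqP Ej Uj].
  by have := G j; rewrite hy Ej eqxx => /(_ ltac:(lia)).
move=> nG.
have : exists j, (0 < j < n) && (take j y == drop (n - j) y).
  move: nG; rewrite /ubd hy => /allPn [j]; rewrite mem_iota negbK => hj Ej.
  by exists j; rewrite Ej andbT; lia.
move=> exP.
case: (ex_minnP exP) => a /andP[ha /eqP Ea] Amin.
have Ua : ubd (take a y).
  apply/ubdP => i; rewrite size_takel; last lia.
  move=> hi; apply/negP => /eqP Ei.
  have : take i y = drop (n - i) y.
    rewrite -(take_takel _ (_ : i <= a)); last lia.
    rewrite Ei Ea drop_drop.
    by have -> : a - i + (n - a) = n - i by lia.
  move/eqP => Ei'.
  have : a <= i by apply: Amin; rewrite Ei' andbT; lia.
  lia.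
have han : 2 * a <= n.
  rewrite leqNgt; apply/negP => h1.
  have B := overlap_border (y := y) (j := a) ltac:(by rewrite hy) ltac:(lia) ltac:(lia).
  move/ubdP: Ua => /(_ (2 * a - size y)); rewrite size_takel; last lia.
  move=> /(_ ltac:(lia)); rewrite B.
  have -> : a - (2 * a - size y) = size y - a by lia.
  by rewrite eqxx.
apply/hasP; exists a; first by rewrite mem_index_iota; lia.
by rewrite han Ea eqxx /= -Ea.
Qed.

Lemma ubd_rec k n : 1 <= n ->
  k ^ n = N (@ubd k) n +
          \sum_(1 <= j < n) (2 * j <= n) * (N (@ubd k) j * k ^ (n - 2 * j)).
Proof.
move=> hn; rewrite -N_true.
rewrite (N_sum2 (R := @ubd k) (r := index_iota 1 n)
   (Q := fun j y => (2 * j <= n) && ((take j y == drop (n - j) y) && ubd (take j y)))); last first.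
  by move=> s hs; apply: ubd_decomp.
congr addn.
apply: eq_big_nat => j /andP[h1 h2].
rewrite N_const; case: (leqP (2 * j) n) => hj; rewrite ?mul0n ?mul1n //.
have H : N (fun s : seq 'I_k => (drop (n - j) s == take j (take (n - j) s)) && ubd (take j s)) (n - j + j)
   = N (fun x : seq 'I_k => ubd (take j (x ++ take j x))) (n - j).
  by apply: (@N_app k (take j) (fun s => ubd (take j s))) => x hx; rewrite size_takel // hx; lia.
rewrite subnK in H; last lia.
transitivity (N (fun s : seq 'I_k => (drop (n - j) s == take j (take (n - j) s)) && ubd (take j s)) n).
  apply: N_ext => s hs; rewrite take_takel; last lia.
  by rewrite eq_sym.
rewrite H (_ : n - j = j + (n - 2 * j)); last lia.
transitivity (N (fun s : seq 'I_k => ubd (take j s) && (fun _ => true) (drop j s)) (j + (n - 2 * j))).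
  apply: N_ext => s hs; rewrite andbT takel_cat //; slia.
by rewrite (N_split (@ubd k) (fun _ => true)) N_true.
Qed.

Lemma prime_ubd k n : 1 <= n -> N (@primew k) (2 * n) = N (@ubd k) n.
Proof.
elim/ltn_ind: n => n IH hn.
have e1 := prime_rec k hn; have e2 := ubd_rec k hn.
have ES : \sum_(1 <= j < n) (2 * j <= n) * (N (@primew k) (2 * j) * k ^ (n - 2 * j)) =
          \sum_(1 <= j < n) (2 * j <= n) * (N (@ubd k) j * k ^ (n - 2 * j)).
  by apply: eq_big_nat => j /andP[h1 h2]; rewrite IH.
by apply/eqP; rewrite -(eqn_add2r (\sum_(1 <= j < n) (2 * j <= n) * (N (@ubd k) j * k ^ (n - 2 * j)))) -{1}ES -e1 -e2.
Qed.

Theorem lemma1 (k n : nat) : 2 <= k -> 1 <= n ->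
  pk k n = \sum_(1 <= i < n.+1) uk k i * pk k (n - i).
Proof.
move=> _ hn.
have Hp : forall m, pk k m = N (@palb k) (2 * m) by move=> m; rewrite /pk card_N.
have Hu : forall m, uk k m = N (@ubd k) m.
  move=> m; rewrite /uk card_N; apply: N_ext => s _.
  by apply/asboolP/idP => /unbordered_ubd.
rewrite Hp pal_count //; apply: eq_big_nat => i /andP[h1 h2].
by rewrite Hp Hu prime_ubd.
Qed.
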